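(* Let $n\ge 2$ and let $G=(A,B,E)$ be a $(k,\epsilon)$-unbalanced expander with $|A|=n$, $|B|=m$ and left degree $d$, where $1/\epsilon<n$ and $d<n$. Let $\Phi$ be the $m\times n$ adjacency matrix of $G$. Then there is an absolute constant $C>1$ (independent of $n,m,k,d,\epsilon$) such that for every $p$ with $1\le p\le 1+1/\log n$ and every $k$-sparse vector $x\in\mathbb{R}^n$, $$(1-C\epsilon)\,\|x\|_p\;\le\;\|d^{-1/p}\Phi x\|_p\;\le\;(1+C\epsilon)\,\|x\|_p .$$ (In particular, for $p=1$ one may take $(1-2\epsilon)\|x\|_1\le \|\Phi x\|_1/d\le \|x\|_1$.)
   Context: A $(k,\epsilon)$-unbalanced expander is a simple bipartite graph $G=(A,B,E)$ in which every vertex of $A$ has exactly $d$ neighbours (left degree $d$) such that for every $X\subseteq A$ with $|X|\le k$, the neighbourhood $N(X)\subseteq B$ satisfies $|N(X)|\ge(1-\epsilon)d|X|$. The adjacency matrix of $G$ (with $A=\{1,\dots,n\}$, $B=\{1,\dots,m\}$) is the $m\times n$ $0$–$1$ matrix with entry $(j,i)$ equal to $1$ iff $(i,j)\in E$. A vector is $k$-sparse if it has at most $k$ nonzero coordinates. $\|x\|_p=(\sum_i|x_i|^p)^{1/p}$. *)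

(* Defs.v *)
From Stdlib Require Import Reals List Arith Lra.
Import ListNotations.
Open Scope R_scope.

Fixpoint fsum (n : nat) (f : nat -> R) : R :=
  match n with
  | O => 0
  | S n' => fsum n' f + f n'
  end.

(* a^b for a >= 0 (with 0^b = 0, b > 0 in all uses) *)
Definition rpow (a b : R) : R := if Rle_dec a 0 then 0 else Rpower a b.

Definition pnorm (n : nat) (p : R) (x : nat -> R) : R :=
  rpow (fsum n (fun i => rpow (Rabs (x i)) p)) (1 / p).

(* A simple bipartite graph G = (A, B, E) with A = {0..n-1}, B = {0..m-1}
   is given by a boolean edge relation E i j  (i in A, j in B). *)

Definition left_regular (n m d : nat) (E : nat -> nat -> bool) : Prop :=
  forall i, (i < n)%nat -> length (filter (E i) (seq 0 m)) = d.

Definition nbhd_card (m : nat) (E : nat -> nat -> bool) (X : list nat) : nat :=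
  length (filter (fun j => existsb (fun i => E i j) X) (seq 0 m)).

Definition unbalanced_expander (n m d k : nat) (eps : R)
    (E : nat -> nat -> bool) : Prop :=
  left_regular n m d E /\
  forall X : list nat, NoDup X -> (forall i, In i X -> (i < n)%nat) ->
    (length X <= k)%nat ->
    INR (nbhd_card m E X) >= (1 - eps) * INR d * INR (length X).

(* adjacency matrix: m x n 0-1 matrix, entry (j,i) = 1 iff (i,j) in E *)
Definition adj (E : nat -> nat -> bool) (j i : nat) : R :=
  if E i j then 1 else 0.

Definition matvec (n : nat) (Phi : nat -> nat -> R) (x : nat -> R) : nat -> R :=
  fun j => fsum n (fun i => Phi j i * x i).

Definition sparse (n k : nat) (x : nat -> R) : Prop :=
  exists S : list nat, NoDup S /\ (length S <= k)%nat /\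
    forall i, (i < n)%nat -> ~ In i S -> x i = 0.

(* Main.v *)
Require Import Defs.
From Stdlib Require Import Reals List Arith Lra Lia.
Import ListNotations.
Open Scope R_scope.
Lemma Rdiv_le_0_compat_alt : forall a b, 0 <= a -> 0 < b -> 0 <= a / b.
Proof. intros; unfold Rdiv; apply Rmult_le_pos; [auto| left; apply Rinv_0_lt_compat; auto]. Qed.

Lemma exp_le_mono : forall a b, a <= b -> exp a <= exp b.
Proof. intros a b H; destruct (Req_dec a b) as [->|]; [lra|]. left; apply exp_increasing; lra. Qed.

Lemma rpow_nonneg : forall a q, 0 <= rpow a q.
Proof. intros; unfold rpow; destruct (Rle_dec a 0); [lra|]. unfold Rpower; left; apply exp_pos. Qed.

Lemma rpow_pos_eq : forall a q, 0 < a -> rpow a q = Rpower a q.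
Proof. intros; unfold rpow; destruct (Rle_dec a 0); [lra|reflexivity]. Qed.

Lemma rpow_0 : forall q, rpow 0 q = 0.
Proof. intros; unfold rpow; destruct (Rle_dec 0 0); [reflexivity|lra]. Qed.

Lemma rpow_pos : forall a q, 0 < a -> 0 < rpow a q.
Proof. intros; rewrite rpow_pos_eq by lra; unfold Rpower; apply exp_pos. Qed.

Lemma rpow_1 : forall a, 0 <= a -> rpow a 1 = a.
Proof. intros a H; destruct (Req_dec a 0) as [->|]; [apply rpow_0|].
  rewrite rpow_pos_eq by lra; apply Rpower_1; lra. Qed.

Lemma rpow_mono : forall a b q, 0 <= q -> a <= b -> rpow a q <= rpow b q.
Proof. intros a b q Hq H. destruct (Rle_dec a 0).
  - unfold rpow at 1; destruct (Rle_dec a 0); [apply rpow_nonneg|lra].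
  - rewrite !rpow_pos_eq by lra. apply Rle_Rpower_l; lra. Qed.

Lemma rpow_mul : forall a b q, 0 <= a -> 0 <= b -> rpow (a * b) q = rpow a q * rpow b q.
Proof. intros a b q Ha Hb.
  destruct (Req_dec a 0) as [->|]; [rewrite Rmult_0_l, !rpow_0; lra|].
  destruct (Req_dec b 0) as [->|]; [rewrite Rmult_0_r, !rpow_0; lra|].
  rewrite !rpow_pos_eq by nra. rewrite Rpower_mult_distr; auto; lra. Qed.

Lemma rpow_split : forall a p, 0 <= a -> rpow a p = a * rpow a (p - 1).
Proof. intros a p Ha. destruct (Req_dec a 0) as [->|]; [rewrite !rpow_0; lra|].
  rewrite !rpow_pos_eq by lra. replace p with (1 + (p - 1)) at 1 by ring.
  rewrite Rpower_plus, Rpower_1; lra. Qed.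

Lemma rpow_inv : forall a p, 0 <= a -> 0 < p -> rpow (rpow a p) (1 / p) = a.
Proof. intros a p Ha Hp. destruct (Req_dec a 0) as [->|]; [rewrite !rpow_0; lra|].
  rewrite (rpow_pos_eq a) by lra. rewrite rpow_pos_eq by (unfold Rpower; apply exp_pos).
  rewrite Rpower_mult. replace (p * (1/p)) with 1 by (field; lra). apply Rpower_1; lra. Qed.

Lemma rpow_le_self : forall a q, 1 <= a -> 0 < q <= 1 -> rpow a q <= a.
Proof. intros. rewrite rpow_pos_eq by lra. rewrite <- (Rpower_1 a) at 2 by lra.
  apply Rle_Rpower; lra. Qed.

Lemma rpow_ge_self : forall a q, 0 <= a <= 1 -> 0 < q <= 1 -> a <= rpow a q.
Proof. intros a q Ha Hq. destruct (Req_dec a 0) as [->|]; [rewrite rpow_0; lra|].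
  rewrite rpow_pos_eq by lra. rewrite <- (Rpower_1 a) at 1 by lra. unfold Rpower.
  apply exp_le_mono. assert (ln a <= 0).
  { destruct (Req_dec a 1) as [->|]; [rewrite ln_1; lra|]. left.
    rewrite <- ln_1. apply ln_increasing; lra. } nra. Qed.

Lemma amgm : forall z q, 0 < z -> 0 <= q <= 1 -> Rpower z q <= q * z + (1 - q).
Proof. intros z q Hz Hq. unfold Rpower. set (a := ln z). set (c := q * a).
  assert (Ha : exp a = z) by (apply exp_ln; auto).
  assert (H1 : exp a >= exp c * (1 + (a - c))).
  { replace a with (c + (a - c)) at 1 by ring. rewrite exp_plus.
    pose proof (exp_ineq1_le (a - c)). pose proof (exp_pos c). nra. }
  assert (H2 : 1 >= exp c * (1 - c)).
  { assert (E0 : exp c * exp (- c) = 1) by (rewrite <- exp_plus; replace (c + - c) with 0 by ring; apply exp_0).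
    pose proof (exp_ineq1_le (- c)). pose proof (exp_pos c). nra. }
  rewrite <- Ha. replace (q * a) with c by reflexivity.
  assert (exp c = q * (exp c * (1 + (a - c))) + (1 - q) * (exp c * (1 - c))).
  { unfold c; ring. } nra. Qed.

Lemma bernoulli : forall y p, 0 <= y -> 1 <= p -> 1 + p * (y - 1) <= rpow y p.
Proof. intros y p Hy Hp. destruct (Req_dec y 0) as [->|]; [rewrite rpow_0; nra|].
  rewrite rpow_pos_eq by lra.
  assert (Hz : 0 < Rpower y p) by (unfold Rpower; apply exp_pos).
  pose proof (amgm (Rpower y p) (1/p) Hz).
  rewrite Rpower_mult in H0. replace (p * (1/p)) with 1 in H0 by (field; lra).
  rewrite Rpower_1 in H0 by lra.
  assert (0 <= 1/p <= 1). { split; [apply Rlt_le; unfold Rdiv; rewrite Rmult_1_l; apply Rinv_0_lt_compat; lra|].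
    apply (Rmult_le_reg_l p); [lra|]. field_simplify; lra. }
  specialize (H0 H1).
  apply (Rmult_le_compat_l p) in H0; [|lra].
  replace (p * (1 / p * Rpower y p + (1 - 1 / p))) with (Rpower y p + p - 1) in H0 by (field; lra).
  nra. Qed.

Lemma tangent : forall t u p, 0 <= t -> 0 < u -> 1 <= p ->
  rpow u p + p * rpow u (p - 1) * (t - u) <= rpow t p.
Proof. intros t u p Ht Hu Hp.
  replace t with (u * (t / u)) at 2 by (field; lra).
  rewrite rpow_mul by (try lra; apply Rdiv_le_0_compat_alt; lra).
  pose proof (bernoulli (t / u) p ltac:(apply Rdiv_le_0_compat_alt; lra) Hp).
  pose proof (rpow_split u p ltac:(lra)).
  pose proof (rpow_pos u p Hu).
  assert (rpow u p * (1 + p * (t / u - 1)) = rpow u p + p * rpow u (p - 1) * (t - u)).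
  { rewrite H0. field. lra. }
  nra. Qed.

Lemma fsum_ext : forall n f g, (forall i, f i = g i) -> fsum n f = fsum n g.
Proof. induction n; simpl; intros; [reflexivity|]. rewrite (IHn f g), H; auto. Qed.
Lemma fsum_plus : forall n f g, fsum n (fun i => f i + g i) = fsum n f + fsum n g.
Proof. induction n; simpl; intros; [lra|]. rewrite IHn; lra. Qed.
Lemma fsum_minus : forall n f g, fsum n (fun i => f i - g i) = fsum n f - fsum n g.
Proof. induction n; simpl; intros; [lra|]. rewrite IHn; lra. Qed.
Lemma fsum_scal : forall n c f, fsum n (fun i => c * f i) = c * fsum n f.
Proof. induction n; simpl; intros; [lra|]. rewrite IHn; lra. Qed.
Lemma fsum_zero : forall n, fsum n (fun _ => 0) = 0.
Proof. induction n; simpl; [lra|]. rewrite IHn; lra. Qed.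
Lemma fsum_le : forall n f g, (forall i, f i <= g i) -> fsum n f <= fsum n g.
Proof. induction n; simpl; intros; [lra|]. specialize (IHn f g H). specialize (H n). lra. Qed.

Definition ind (b : bool) : R := if b then 1 else 0.

Lemma INR_length_filter : forall P m,
  INR (length (filter P (seq 0 m))) = fsum m (fun j => ind (P j)).
Proof. induction m; [simpl; lra|]. rewrite seq_S, filter_app, length_app, plus_INR, IHm.
  simpl. unfold ind; destruct (P m); simpl; lra. Qed.

Definition lsum (f : nat -> R) (l : list nat) : R := fold_right (fun i acc => f i + acc) 0 l.
Definition lmax (f : nat -> R) (l : list nat) : R := fold_right (fun i acc => Rmax (f i) acc) 0 l.

Lemma lsum_app : forall f l1 l2, lsum f (l1 ++ l2) = lsum f l1 + lsum f l2.
Proof. induction l1; simpl; intros; [lra|]. rewrite IHl1; lra. Qed.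
Lemma lsum_ext : forall f g l, (forall i, In i l -> f i = g i) -> lsum f l = lsum g l.
Proof. induction l; simpl; intros; [reflexivity|]. rewrite H, IHl; auto. Qed.
Lemma lsum_plus : forall f g l, lsum (fun i => f i + g i) l = lsum f l + lsum g l.
Proof. induction l; simpl; [lra|]. rewrite IHl; lra. Qed.
Lemma lsum_scal : forall c f l, lsum (fun i => c * f i) l = c * lsum f l.
Proof. induction l; simpl; [lra|]. rewrite IHl; lra. Qed.
Lemma lsum_le : forall f g l, (forall i, In i l -> f i <= g i) -> lsum f l <= lsum g l.
Proof. induction l; simpl; intros; [lra|]. pose proof (H a (or_introl eq_refl)).
  assert (lsum f l <= lsum g l) by (apply IHl; auto). lra. Qed.
Lemma lsum_nonneg : forall f l, (forall i, In i l -> 0 <= f i) -> 0 <= lsum f l.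
Proof. intros. replace 0 with (lsum (fun _ => 0) l). apply lsum_le; auto.
  clear; induction l; simpl; lra. Qed.
Lemma lsum_const_le : forall c l, 0 <= c -> lsum (fun _ => c) l = INR (length l) * c.
Proof. induction l; simpl; intros; [lra|]. rewrite IHl by auto. destruct (length l); simpl; lra. Qed.

Lemma fsum_lsum_swap : forall m (F : nat -> nat -> R) l,
  fsum m (fun j => lsum (fun i => F i j) l) = lsum (fun i => fsum m (F i)) l.
Proof. induction l; simpl. apply fsum_zero.
  rewrite fsum_plus, IHl; reflexivity. Qed.

Lemma lmax_nonneg : forall f l, 0 <= lmax f l.
Proof. induction l; simpl; [lra|]. pose proof (Rmax_r (f a) (lmax f l)); lra. Qed.
Lemma lmax_ge : forall f l i, In i l -> f i <= lmax f l.
Proof. induction l; simpl; intros i H; [tauto|]. destruct H as [->|H].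
  apply Rmax_l. pose proof (IHl i H). pose proof (Rmax_r (f a) (lmax f l)); lra. Qed.
Lemma lmax_le : forall f l c, 0 <= c -> (forall i, In i l -> f i <= c) -> lmax f l <= c.
Proof. induction l; simpl; intros; [lra|]. apply Rmax_lub; auto. Qed.
Lemma lmax_app : forall f l1 l2, lmax f (l1 ++ l2) = Rmax (lmax f l1) (lmax f l2).
Proof. induction l1; simpl; intros. rewrite Rmax_right; [reflexivity|apply lmax_nonneg].
  rewrite IHl1, Rmax_assoc; reflexivity. Qed.
Lemma lmax_le_lsum : forall f l, (forall i, In i l -> 0 <= f i) -> lmax f l <= lsum f l.
Proof. induction l; simpl; intros; [lra|].
  assert (lmax f l <= lsum f l) by auto. assert (0 <= lsum f l) by (apply lsum_nonneg; auto).
  pose proof (H a (or_introl eq_refl)). apply Rmax_lub; lra. Qed.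
Lemma lmax_zero : forall f l, (forall i, In i l -> f i = 0) -> lmax f l = 0.
Proof. intros. apply Rle_antisym; [apply lmax_le; [lra|]|apply lmax_nonneg].
  intros; rewrite H; auto; lra. Qed.
Lemma lsum_zero : forall f l, (forall i, In i l -> f i = 0) -> lsum f l = 0.
Proof. intros. rewrite (lsum_ext f (fun _ => 0)) by auto. clear; induction l; simpl; lra. Qed.

Lemma lmax_map : forall (h : R -> R) f l, h 0 = 0 ->
  (forall a b, 0 <= a -> 0 <= b -> a <= b -> h a <= h b) ->
  (forall i, In i l -> 0 <= f i) ->
  lmax (fun i => h (f i)) l = h (lmax f l).
Proof. intros h f l H0 Hm. induction l; simpl; intros; [auto|].
  rewrite IHl by auto. pose proof (lmax_nonneg f l). pose proof (H a (or_introl eq_refl)).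
  destruct (Rle_dec (f a) (lmax f l)).
  - rewrite (Rmax_right (f a)) by auto. apply Rmax_right; auto.
  - rewrite (Rmax_left (f a)) by lra. apply Rmax_left; apply Hm; lra. Qed.

Lemma lmax_attained : forall f l, lmax f l = 0 \/ exists i, In i l /\ lmax f l = f i.
Proof. induction l; simpl; [auto|]. destruct (Rle_dec (f a) (lmax f l)).
  - rewrite Rmax_right by auto. destruct IHl as [H|[i [Hi H]]]; [auto|right; exists i; auto].
  - rewrite Rmax_left by lra. right; exists a; auto. Qed.

Lemma row_lower : forall v l,
  2 * lmax (fun i => Rabs (v i)) l - lsum (fun i => Rabs (v i)) l <= Rabs (lsum v l).
Proof. induction l; simpl. rewrite Rabs_R0; lra.
  set (M := lmax (fun i => Rabs (v i)) l) in *. set (S := lsum (fun i => Rabs (v i)) l) in *.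
  assert (Rabs (lsum v l) <= S).
  { unfold S; clear. induction l; simpl. rewrite Rabs_R0; lra.
    pose proof (Rabs_triang (v a) (lsum v l)); lra. }
  assert (Rabs (v a) - Rabs (lsum v l) <= Rabs (v a + lsum v l) /\ Rabs (lsum v l) - Rabs (v a) <= Rabs (v a + lsum v l)).
  { clear. set (x := v a); set (y := lsum v l). unfold Rabs; repeat destruct Rcase_abs; lra. }
  destruct (Rle_dec (Rabs (v a)) M).
  - rewrite Rmax_right by auto. lra.
  - rewrite Rmax_left by lra. lra. Qed.

Lemma row_upper : forall v l, Rabs (lsum v l) <= lsum (fun i => Rabs (v i)) l.
Proof. induction l; simpl. rewrite Rabs_R0; lra.
  pose proof (Rabs_triang (v a) (lsum v l)); lra. Qed.

Lemma fsum_to_lsum : forall n f T, NoDup T -> (forall i, In i T -> (i < n)%nat) ->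
  (forall i, (i < n)%nat -> ~ In i T -> f i = 0) -> fsum n f = lsum f T.
Proof. induction n; intros f T HN Hlt Hz.
  - destruct T as [|a T]; [reflexivity|]. specialize (Hlt a (or_introl eq_refl)); lia.
  - simpl. destruct (in_dec Nat.eq_dec n T) as [Hin|Hin].
    + destruct (in_split _ _ Hin) as [T1 [T2 ->]].
      rewrite (IHn f (T1 ++ T2)).
      * rewrite !lsum_app; simpl; lra.
      * eapply NoDup_remove_1; eauto.
      * intros i Hi. assert (Hi' : In i (T1 ++ n :: T2)) by (apply in_app_or in Hi; apply in_or_app; simpl; tauto).
        pose proof (Hlt i Hi'). pose proof (NoDup_remove_2 _ _ _ HN).
        destruct (Nat.eq_dec i n); [subst; tauto|lia].
      * intros i Hi Hni. apply Hz; [lia|]. intro Hc. apply in_app_or in Hc; simpl in Hc.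
        destruct Hc as [Hc|[Hc|Hc]]; [|lia|]; apply Hni; apply in_or_app; auto.
    + rewrite (Hz n) by (auto; lia). rewrite (IHn f T); [lra|auto| |].
      * intros i Hi; pose proof (Hlt i Hi). destruct (Nat.eq_dec i n); [subst; tauto|lia].
      * intros; apply Hz; auto; lia. Qed.

Definition wgt (E : nat -> nat -> bool) (g : nat -> R) (j i : nat) : R := ind (E i j) * g i.
Definition Drow E g T j := lsum (wgt E g j) T - lmax (wgt E g j) T.
Definition exI (E : nat -> nat -> bool) (T : list nat) (j : nat) := ind (existsb (fun i => E i j) T).

Lemma ind_nonneg : forall b, 0 <= ind b.
Proof. destruct b; simpl; lra. Qed.

Lemma wgt_nonneg : forall E g j i, 0 <= g i -> 0 <= wgt E g j i.
Proof. intros; unfold wgt; pose proof (ind_nonneg (E i j)); nra. Qed.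

Lemma existsb_false_all : forall (f : nat -> bool) l, existsb f l = false -> forall i, In i l -> f i = false.
Proof. induction l; simpl; intros; [tauto|]. apply Bool.orb_false_iff in H. destruct H0 as [->|]; [tauto|]. apply IHl; tauto. Qed.

Lemma row_step : forall E g T1 T2 i0 j, (forall i, 0 <= g i) ->
  (forall i, In i (T1 ++ T2) -> g i0 <= g i) ->
  Drow E g (T1 ++ i0 :: T2) j = Drow E g (T1 ++ T2) j +
     g i0 * (ind (E i0 j) - (exI E (T1 ++ i0 :: T2) j - exI E (T1 ++ T2) j)).
Proof. intros E g T1 T2 i0 j Hg Hmin. unfold Drow, exI.
  assert (Hs : lsum (wgt E g j) (T1 ++ i0 :: T2) = lsum (wgt E g j) (T1 ++ T2) + wgt E g j i0).
  { rewrite !lsum_app; simpl; lra. }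
  assert (Hm : lmax (wgt E g j) (T1 ++ i0 :: T2) = Rmax (wgt E g j i0) (lmax (wgt E g j) (T1 ++ T2))).
  { rewrite !lmax_app; simpl. rewrite !Rmax_assoc, (Rmax_comm (lmax _ T1)). reflexivity. }
  rewrite Hs, Hm. clear Hs Hm.
  assert (He : existsb (fun i => E i j) (T1 ++ i0 :: T2) = (E i0 j || existsb (fun i => E i j) (T1 ++ T2))%bool).
  { rewrite !existsb_app; simpl. destruct (existsb _ T1), (E i0 j), (existsb _ T2); reflexivity. }
  rewrite He. pose proof (Hg i0).
  unfold wgt at 2 3. destruct (E i0 j) eqn:Ei0; simpl.
  - destruct (existsb (fun i => E i j) (T1 ++ T2)) eqn:Ex; simpl.
    + apply existsb_exists in Ex. destruct Ex as [i [Hi Ei]].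
      assert (g i <= lmax (wgt E g j) (T1 ++ T2)).
      { replace (g i) with (wgt E g j i) by (unfold wgt; rewrite Ei; simpl; ring). apply lmax_ge; auto. }
      pose proof (Hmin i Hi). rewrite Rmax_right by lra. lra.
    + pose proof (existsb_false_all _ _ Ex).
      rewrite lsum_zero, lmax_zero; try (intros; unfold wgt; rewrite H0; simpl; auto; ring).
      rewrite Rmax_left by lra. lra.
  - rewrite Rmult_0_l, Rmax_right by apply lmax_nonneg.
    destruct (existsb (fun i => E i j) (T1 ++ T2)); simpl; lra. Qed.

Lemma min_exists : forall (g : nat -> R) l, l <> [] -> exists i0, In i0 l /\ forall i, In i l -> g i0 <= g i.
Proof. induction l; intros H; [congruence|]. destruct l as [|b l].
  - exists a; simpl; split; auto. intros i [->|[]]; lra.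
  - destruct (IHl ltac:(discriminate)) as [i1 [Hi1 Hm]].
    destruct (Rle_dec (g a) (g i1)).
    + exists a; split; [left; auto|]. intros i [->|Hi]; [lra|]. specialize (Hm i Hi); lra.
    + exists i1; split; [right; auto|]. intros i [->|Hi]; [lra|]. auto. Qed.

Section Dlemma.
Variables (n m d k : nat) (eps : R) (E : nat -> nat -> bool).
Hypothesis Hreg : left_regular n m d E.
Hypothesis Hexp : forall X : list nat, NoDup X -> (forall i, In i X -> (i < n)%nat) ->
    (length X <= k)%nat ->
    INR (nbhd_card m E X) >= (1 - eps) * INR d * INR (length X).

Lemma reg_fsum : forall i, (i < n)%nat -> fsum m (fun j => ind (E i j)) = INR d.
Proof. intros. rewrite <- (Hreg i H), INR_length_filter. reflexivity. Qed.

Lemma nbhd_fsum : forall X, INR (nbhd_card m E X) = fsum m (exI E X).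
Proof. intros; unfold nbhd_card, exI; rewrite INR_length_filter; reflexivity. Qed.

Lemma D_strong : forall g, (forall i, 0 <= g i) -> forall r T, length T = r -> NoDup T ->
  (forall i, In i T -> (i < n)%nat) -> (length T <= k)%nat ->
  forall h, 0 <= h -> (forall i, In i T -> h <= g i) ->
  fsum m (Drow E g T) - eps * INR d * lsum g T <=
    (INR d * INR (length T) - fsum m (exI E T) - eps * INR d * INR (length T)) * h.
Proof. intros g Hg. induction r; intros T HL HN Hlt Hk h Hh Hhg.
  - destruct T; [|discriminate]. simpl.
    rewrite (fsum_ext _ _ (fun _ => 0)) by (intros; unfold Drow; simpl; lra).
    rewrite (fsum_ext m (exI E []) (fun _ => 0)) by (intros; reflexivity).
    rewrite fsum_zero. lra.
  - destruct (min_exists g T) as [i0 [Hi0 Hmin]]; [destruct T; discriminate|].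
    destruct (in_split _ _ Hi0) as [T1 [T2 ->]].
    assert (HL' : length (T1 ++ T2) = r) by (rewrite length_app in *; simpl in HL; lia).
    assert (HN' : NoDup (T1 ++ T2)) by (eapply NoDup_remove_1; eauto).
    assert (Hsub : forall i, In i (T1 ++ T2) -> In i (T1 ++ i0 :: T2)).
    { intros i Hi; apply in_app_or in Hi; apply in_or_app; simpl; tauto. }
    assert (Hlt' : forall i, In i (T1 ++ T2) -> (i < n)%nat) by auto.
    assert (Hk' : (length (T1 ++ T2) <= k)%nat) by lia.
    assert (Hg0 : forall i, In i (T1 ++ T2) -> g i0 <= g i) by auto.
    specialize (IHr _ HL' HN' Hlt' Hk' (g i0) (Hg i0) Hg0).
    rewrite (fsum_ext _ _ _ (fun j => row_step E g T1 T2 i0 j Hg Hg0)).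
    rewrite fsum_plus, fsum_scal, fsum_minus, fsum_minus.
    rewrite reg_fsum by auto.
    assert (Hsum : lsum g (T1 ++ i0 :: T2) = lsum g (T1 ++ T2) + g i0) by (rewrite !lsum_app; simpl; lra).
    assert (HLT : INR (length (T1 ++ i0 :: T2)) = INR (length (T1 ++ T2)) + 1)
      by (rewrite !length_app; simpl; rewrite <- plus_n_Sm, S_INR; reflexivity).
    rewrite Hsum, HLT.
    pose proof (Hexp _ HN Hlt Hk) as Hc. rewrite nbhd_fsum, HLT in Hc.
    assert (h <= g i0) by auto.
    set (c := INR d * (INR (length (T1 ++ T2)) + 1) - fsum m (exI E (T1 ++ i0 :: T2)) -
       eps * INR d * (INR (length (T1 ++ T2)) + 1)).
    assert (c <= 0) by (unfold c; lra).
    assert (c * g i0 <= c * h) by nra.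
    unfold c in *. nra. Qed.

Lemma D_bound : forall g, (forall i, 0 <= g i) -> forall T, NoDup T ->
  (forall i, In i T -> (i < n)%nat) -> (length T <= k)%nat ->
  fsum m (Drow E g T) <= eps * INR d * lsum g T.
Proof. intros. pose proof (D_strong g H (length T) T eq_refl H0 H1 H2 0 ltac:(lra)).
  rewrite Rmult_0_r in H3. assert (0 <= 0) by lra. specialize (H3 ltac:(intros; apply H)). lra. Qed.

Lemma rowsum_total : forall g T, (forall i, In i T -> (i < n)%nat) ->
  fsum m (fun j => lsum (wgt E g j) T) = INR d * lsum g T.
Proof. intros. unfold wgt. rewrite (fsum_lsum_swap m (fun i j => ind (E i j) * g i)).
  rewrite <- lsum_scal. apply lsum_ext. intros i Hi.
  rewrite (fsum_ext _ _ (fun j => g i * ind (E i j))) by (intros; ring).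
  rewrite fsum_scal, reg_fsum by auto. ring. Qed.

End Dlemma.

Lemma lmax_ext : forall f g l, (forall i, In i l -> f i = g i) -> lmax f l = lmax g l.
Proof. induction l; simpl; intros; [reflexivity|]. rewrite H, IHl; auto. Qed.

Lemma rpow_ind : forall b p, rpow (ind b) p = ind b.
Proof. intros b p; destruct b; unfold ind. rewrite rpow_pos_eq by lra. unfold Rpower; rewrite ln_1, Rmult_0_r; apply exp_0.
  apply rpow_0. Qed.

Lemma support_list : forall n k x, sparse n k x -> exists T, NoDup T /\
  (forall i, In i T -> (i < n)%nat) /\ (length T <= k)%nat /\
  (forall i, (i < n)%nat -> ~ In i T -> x i = 0).
Proof. intros n k x [S [HN [Hk Hz]]]. exists (filter (fun i => Nat.ltb i n) S).
  split; [apply NoDup_filter; auto|]. split.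
  { intros i Hi. apply filter_In in Hi. destruct Hi as [_ H]. apply Nat.ltb_lt; auto. }
  split. { pose proof (filter_length_le (fun i => Nat.ltb i n) S); lia. }
  intros i Hi Hn. apply Hz; auto. intro HS. apply Hn. apply filter_In. split; auto. apply Nat.ltb_lt; auto. Qed.

Lemma length_le_n : forall n T, NoDup T -> (forall i, In i T -> (i < n)%nat) -> (length T <= n)%nat.
Proof. intros. rewrite <- (length_seq n 0). apply NoDup_incl_length; auto.
  intros i Hi. apply in_seq. specialize (H0 i Hi). lia. Qed.

Lemma lower_row : forall t M R p, 0 <= t -> 0 <= M -> 0 <= R -> M - R <= t -> 1 <= p ->
  rpow M p - p * rpow M (p - 1) * R <= rpow t p.
Proof. intros t M R p Ht HM HR Hle Hp. pose proof (rpow_nonneg t p).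
  destruct (Req_dec M 0) as [->|HM0]. rewrite !rpow_0; lra.
  pose proof (rpow_nonneg M (p-1)).
  destruct (Rle_dec 0 (M - R)).
  - pose proof (tangent (M - R) M p r ltac:(lra) Hp).
    pose proof (rpow_mono (M - R) t p ltac:(lra) Hle).
    replace (p * rpow M (p - 1) * (M - R - M)) with (- (p * rpow M (p - 1) * R)) in H1 by ring. lra.
  - rewrite (rpow_split M p) by lra.
    assert (0 <= rpow M (p - 1) * (p * R - M)) by (apply Rmult_le_pos; nra). nra. Qed.

Lemma upper_row : forall S M p, 0 <= M -> M <= S -> 1 <= p ->
  rpow S p <= rpow M p + p * rpow S (p - 1) * (S - M).
Proof. intros S M p HM HMS Hp. destruct (Req_dec S 0) as [->|].
  - assert (M = 0) by lra. subst. rewrite !rpow_0; lra.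
  - pose proof (tangent M S p HM ltac:(lra) Hp). lra. Qed.

Lemma p_le_3 : forall n p, (2 <= n)%nat -> p <= 1 + 1 / ln (INR n) -> p <= 3.
Proof. intros. assert (INR 2 <= INR n) by (apply le_INR; auto). simpl in H1.
  assert (ln 2 <= ln (INR n)).
  { destruct (Req_dec (INR n) 2) as [->|]; [lra|]. left; apply ln_increasing; lra. }
  pose proof ln_lt_2. assert (1 / ln (INR n) <= 2).
  { apply (Rmult_le_reg_l (ln (INR n))); [lra|]. field_simplify; lra. } lra. Qed.

Lemma n_pow_le_3 : forall n p, (2 <= n)%nat -> 1 <= p -> p <= 1 + 1 / ln (INR n) -> rpow (INR n) (p - 1) <= 3.
Proof. intros. assert (INR 2 <= INR n) by (apply le_INR; auto). simpl in H2.
  assert (0 < ln (INR n)). { rewrite <- ln_1. apply ln_increasing; lra. }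
  rewrite rpow_pos_eq by lra. unfold Rpower. eapply Rle_trans; [|apply exp_le_3].
  apply exp_le_mono. assert (p - 1 <= 1 / ln (INR n)) by lra.
  apply (Rmult_le_compat_r (ln (INR n))) in H4; [|lra]. field_simplify in H4; lra. Qed.

Section Main.
Variables (n m d k : nat) (eps : R) (E : nat -> nat -> bool).
Hypothesis Hn : (2 <= n)%nat.
Hypothesis Hd : (1 <= d)%nat.
Hypothesis Heps : 0 < eps.
Hypothesis Hreg : left_regular n m d E.
Hypothesis Hexp : forall X : list nat, NoDup X -> (forall i, In i X -> (i < n)%nat) ->
    (length X <= k)%nat ->
    INR (nbhd_card m E X) >= (1 - eps) * INR d * INR (length X).
Variable (x : nat -> R) (T : list nat).
Hypothesis HN : NoDup T.
Hypothesis Hlt : forall i, In i T -> (i < n)%nat.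
Hypothesis Hk : (length T <= k)%nat.
Hypothesis Hz : forall i, (i < n)%nat -> ~ In i T -> x i = 0.

Definition g1 i := Rabs (x i).
Definition sr j := lsum (fun i => ind (E i j) * x i) T.

Lemma dpos : 0 < INR d.
Proof. apply lt_0_INR; lia. Qed.

Lemma matvec_sr : forall j, matvec n (adj E) x j = sr j.
Proof. intros. unfold matvec, sr. apply fsum_to_lsum; auto.
  intros. rewrite Hz; auto; ring. Qed.

Lemma abs_v : forall j i, Rabs (ind (E i j) * x i) = wgt E g1 j i.
Proof. intros; unfold wgt, g1. rewrite Rabs_mult. destruct (E i j); simpl; rewrite ?Rabs_R1, ?Rabs_R0; ring. Qed.

Lemma sr_lower : forall j, lsum (wgt E g1 j) T - 2 * Drow E g1 T j <= Rabs (sr j).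
Proof. intros. pose proof (row_lower (fun i => ind (E i j) * x i) T).
  cbv beta in H. rewrite (lsum_ext (fun i => Rabs (ind (E i j) * x i)) (wgt E g1 j)) in H by (intros; apply abs_v).
  rewrite (lmax_ext _ (wgt E g1 j)) in H by (intros; apply abs_v).
  unfold sr, Drow. lra. Qed.

Lemma sr_upper : forall j, Rabs (sr j) <= lsum (wgt E g1 j) T.
Proof. intros. pose proof (row_upper (fun i => ind (E i j) * x i) T).
  cbv beta in H. rewrite (lsum_ext (fun i => Rabs (ind (E i j) * x i)) (wgt E g1 j)) in H by (intros; apply abs_v). exact H. Qed.

Lemma g1_nonneg : forall i, 0 <= g1 i.
Proof. intros; apply Rabs_pos. Qed.

Lemma D1 : fsum m (Drow E g1 T) <= eps * INR d * lsum g1 T.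
Proof. eapply D_bound; eauto. apply g1_nonneg. Qed.

Lemma S1tot : fsum m (fun j => lsum (wgt E g1 j) T) = INR d * lsum g1 T.
Proof. eapply rowsum_total; eauto. Qed.

Lemma part_p1 : fsum m (fun j => Rabs (sr j)) <= INR d * lsum g1 T /\
  INR d * lsum g1 T - 2 * (eps * INR d * lsum g1 T) <= fsum m (fun j => Rabs (sr j)).
Proof. split.
  - rewrite <- S1tot. apply fsum_le; apply sr_upper.
  - pose proof D1. pose proof (fsum_le m _ _ sr_lower).
    rewrite fsum_minus, fsum_scal, S1tot in H0. lra. Qed.

Variable p : R.
Hypothesis Hp1 : 1 <= p.
Hypothesis Hp2 : p <= 1 + 1 / ln (INR n).

Definition gp i := rpow (g1 i) p.
Definition Mx := lmax g1 T.
Definition Mr j := lmax (wgt E g1 j) T.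

Lemma gp_nonneg : forall i, 0 <= gp i.
Proof. intros; apply rpow_nonneg. Qed.

Lemma wgt_p : forall j i, wgt E gp j i = rpow (wgt E g1 j i) p.
Proof. intros; unfold wgt, gp. rewrite rpow_mul, rpow_ind; auto. apply ind_nonneg. apply g1_nonneg. Qed.

Lemma Dp_eq : forall j, Drow E gp T j = lsum (wgt E gp j) T - rpow (Mr j) p.
Proof. intros. unfold Drow, Mr. f_equal.
  rewrite (lmax_ext _ (fun i => rpow (wgt E g1 j i) p)) by (intros; apply wgt_p).
  apply (lmax_map (fun a => rpow a p)). apply rpow_0.
  intros; apply rpow_mono; lra. intros; apply wgt_nonneg, g1_nonneg. Qed.

Lemma Dp : fsum m (Drow E gp T) <= eps * INR d * lsum gp T.
Proof. eapply D_bound; eauto. apply gp_nonneg. Qed.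

Lemma Sptot : fsum m (fun j => lsum (wgt E gp j) T) = INR d * lsum gp T.
Proof. eapply rowsum_total; eauto. Qed.

Lemma Mr_le : forall j, Mr j <= Mx.
Proof. intros. apply lmax_le. apply lmax_nonneg. intros. unfold wgt.
  pose proof (lmax_ge g1 T i H). pose proof (g1_nonneg i). destruct (E i j); simpl; fold Mx in H0; lra. Qed.

Lemma Mr_le_S : forall j, Mr j <= lsum (wgt E g1 j) T.
Proof. intros; apply lmax_le_lsum; intros; apply wgt_nonneg, g1_nonneg. Qed.

Lemma S1_le : forall j, lsum (wgt E g1 j) T <= INR n * Mx.
Proof. intros. eapply Rle_trans. apply (lsum_le _ (fun _ => Mx)).
  { intros. pose proof (lmax_ge g1 T i H). pose proof (g1_nonneg i). unfold wgt. destruct (E i j); simpl; fold Mx in H0; lra. }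
  rewrite lsum_const_le by apply lmax_nonneg. apply Rmult_le_compat_r. apply lmax_nonneg.
  apply le_INR, length_le_n; auto. Qed.

Lemma Mxp : rpow Mx p <= lsum gp T.
Proof. unfold Mx, gp. rewrite <- (lmax_map (fun a => rpow a p)); try (intros; apply g1_nonneg); try apply rpow_0.
  apply lmax_le_lsum. intros; apply rpow_nonneg. intros; apply rpow_mono; lra. Qed.

Lemma key_f : rpow Mx (p - 1) * lsum g1 T <= 4 * lsum gp T.
Proof. pose proof (n_pow_le_3 n p Hn Hp1 Hp2) as H3.
  assert (Hnp : 0 < INR n) by (apply lt_0_INR; lia).
  assert (Hi : forall i, In i T -> rpow Mx (p - 1) * g1 i <= 3 * gp i + rpow Mx p / INR n).
  { intros i Hi. pose proof (lmax_ge g1 T i Hi). fold Mx in H. pose proof (g1_nonneg i).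
    pose proof (rpow_nonneg Mx p). pose proof (rpow_nonneg Mx (p-1)).
    assert (0 <= rpow Mx p / INR n) by (apply Rdiv_le_0_compat_alt; lra).
    pose proof (gp_nonneg i).
    destruct (Req_dec (g1 i) 0) as [He|He]. rewrite He; lra.
    destruct (Rle_dec Mx (INR n * g1 i)).
    - assert (rpow Mx (p - 1) <= 3 * rpow (g1 i) (p - 1)).
      { eapply Rle_trans. apply rpow_mono; [lra|exact r]. rewrite rpow_mul by lra.
        pose proof (rpow_nonneg (g1 i) (p-1)). nra. }
      unfold gp. rewrite (rpow_split (g1 i) p) by lra. nra.
    - replace (rpow Mx p / INR n) with (rpow Mx (p-1) * (Mx / INR n)) by
        (rewrite (rpow_split Mx p) by lra; field; lra).
      assert (g1 i <= Mx / INR n). { apply (Rmult_le_reg_l (INR n)); [lra|]. field_simplify; lra. }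
      nra. }
  eapply Rle_trans. rewrite <- lsum_scal. apply lsum_le. exact Hi.
  rewrite lsum_plus, lsum_scal, lsum_const_le by (apply Rdiv_le_0_compat_alt; [apply rpow_nonneg|lra]).
  pose proof Mxp. pose proof (rpow_nonneg Mx p).
  assert (INR (length T) * (rpow Mx p / INR n) <= rpow Mx p).
  { pose proof (le_INR _ _ (length_le_n n T HN Hlt)). unfold Rdiv.
    replace (rpow Mx p) with (INR n * (rpow Mx p * / INR n)) at 2 by (field; lra).
    apply Rmult_le_compat_r; auto. apply Rmult_le_pos; auto. left; apply Rinv_0_lt_compat; lra. }
  lra. Qed.

Definition Yp := fsum m (fun j => rpow (Rabs (sr j)) p).

Lemma Y_upper : Yp <= INR d * lsum gp T * (1 + 36 * eps).
Proof. pose proof (p_le_3 n p Hn Hp2). pose proof (n_pow_le_3 n p Hn Hp1 Hp2).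
  assert (Hrow : forall j, rpow (Rabs (sr j)) p <= rpow (Mr j) p + 3 * p * rpow Mx (p - 1) * Drow E g1 T j).
  { intros j. pose proof (sr_upper j). pose proof (Mr_le_S j). pose proof (lmax_nonneg (wgt E g1 j) T).
    fold (Mr j) in H3. eapply Rle_trans. apply rpow_mono; [lra|exact H1].
    eapply Rle_trans. apply upper_row; eauto. unfold Drow. fold (Mr j).
    assert (rpow (lsum (wgt E g1 j) T) (p - 1) <= 3 * rpow Mx (p - 1)).
    { eapply Rle_trans. apply rpow_mono; [lra|apply S1_le]. rewrite rpow_mul.
      pose proof (rpow_nonneg Mx (p-1)). nra. apply pos_INR. apply lmax_nonneg. }
    assert (0 <= p * (lsum (wgt E g1 j) T - Mr j)) by nra.
    pose proof (Rmult_le_compat_l _ _ _ H5 H4). nra. }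
  unfold Yp. eapply Rle_trans. apply fsum_le; exact Hrow.
  rewrite fsum_plus.
  rewrite fsum_scal.
  assert (fsum m (fun j => rpow (Mr j) p) <= INR d * lsum gp T).
  { rewrite <- Sptot. apply fsum_le. intros j. pose proof (Dp_eq j).
    assert (0 <= Drow E gp T j). { unfold Drow. pose proof (lmax_le_lsum (wgt E gp j) T). 
      assert (lmax (wgt E gp j) T <= lsum (wgt E gp j) T) by (apply H2; intros; apply wgt_nonneg, gp_nonneg). lra. }
    lra. }
  pose proof D1. pose proof key_f. pose proof (rpow_nonneg Mx (p-1)). pose proof dpos.
  assert (0 <= lsum gp T) by (apply lsum_nonneg; intros; apply gp_nonneg).
  assert (0 <= lsum g1 T) by (apply lsum_nonneg; intros; apply g1_nonneg).
  assert (3 * p * rpow Mx (p - 1) * fsum m (Drow E g1 T) <= 3 * p * rpow Mx (p - 1) * (eps * INR d * lsum g1 T)).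
  { apply Rmult_le_compat_l; auto. nra. }
  assert (3 * p * (eps * INR d) * (rpow Mx (p - 1) * lsum g1 T) <= 3 * 3 * (eps * INR d) * (4 * lsum gp T)).
  { assert (0 <= eps * INR d) by (apply Rmult_le_pos; lra).
    apply Rmult_le_compat. apply Rmult_le_pos; lra. apply Rmult_le_pos; lra.
    apply Rmult_le_compat_r; lra. auto. }
  nra. Qed.

Lemma Y_lower : INR d * lsum gp T * (1 - 13 * eps) <= Yp.
Proof. pose proof (p_le_3 n p Hn Hp2).
  assert (Hrow : forall j, rpow (Mr j) p - p * rpow Mx (p - 1) * Drow E g1 T j <= rpow (Rabs (sr j)) p).
  { intros j. pose proof (sr_lower j). pose proof (Mr_le_S j). pose proof (lmax_nonneg (wgt E g1 j) T).
    fold (Mr j) in H2. pose proof (lower_row (Rabs (sr j)) (Mr j) (Drow E g1 T j) p (Rabs_pos _) H2).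
    unfold Drow in *. fold (Mr j) in *. 
    assert (HA : rpow (Mr j) (p - 1) <= rpow Mx (p - 1)) by (apply rpow_mono; [lra|apply Mr_le]).
    assert (rpow (Mr j) p - p * rpow (Mr j) (p - 1) * (lsum (wgt E g1 j) T - Mr j) <= rpow (Rabs (sr j)) p)
      by (apply H3; lra).
    assert (HB : 0 <= p * (lsum (wgt E g1 j) T - Mr j)) by nra.
    pose proof (Rmult_le_compat_l _ _ _ HB HA). nra. }
  unfold Yp. eapply Rle_trans; [|apply fsum_le; exact Hrow].
  rewrite fsum_minus.
  rewrite fsum_scal.
  assert (INR d * lsum gp T - eps * INR d * lsum gp T <= fsum m (fun j => rpow (Mr j) p)).
  { pose proof Dp. rewrite (fsum_ext _ _ _ Dp_eq) in H0. rewrite fsum_minus, Sptot in H0. lra. }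
  pose proof D1. pose proof key_f. pose proof (rpow_nonneg Mx (p-1)). pose proof dpos.
  assert (0 <= lsum gp T) by (apply lsum_nonneg; intros; apply gp_nonneg).
  assert (0 <= lsum g1 T) by (apply lsum_nonneg; intros; apply g1_nonneg).
  assert (p * rpow Mx (p - 1) * fsum m (Drow E g1 T) <= p * rpow Mx (p - 1) * (eps * INR d * lsum g1 T)).
  { apply Rmult_le_compat_l; auto. nra. }
  assert (p * (eps * INR d) * (rpow Mx (p - 1) * lsum g1 T) <= 3 * (eps * INR d) * (4 * lsum gp T)).
  { assert (0 <= eps * INR d) by (apply Rmult_le_pos; lra).
    apply Rmult_le_compat. apply Rmult_le_pos; lra. apply Rmult_le_pos; lra.
    apply Rmult_le_compat_r; lra. auto. }
  nra. Qed.

End Main.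

Lemma final_bounds : forall X Y D eps p, 0 <= X -> 0 < D -> 0 < eps -> 1 <= p ->
  D * X * (1 - 13 * eps) <= Y -> Y <= D * X * (1 + 36 * eps) ->
  (1 - 40 * eps) * rpow X (1 / p) <= rpow (/ D * Y) (1 / p) /\
  rpow (/ D * Y) (1 / p) <= (1 + 40 * eps) * rpow X (1 / p).
Proof. intros X Y D eps p HX HD He Hp HL HU.
  assert (Hq : 0 < 1 / p <= 1).
  { split. apply Rdiv_lt_0_compat; lra. apply (Rmult_le_reg_l p); [lra|]. field_simplify; lra. }
  assert (HiD : 0 < / D) by (apply Rinv_0_lt_compat; lra).
  assert (E1 : / D * (D * X * (1 - 13 * eps)) = (1 - 13 * eps) * X) by (field; lra).
  assert (E2 : / D * (D * X * (1 + 36 * eps)) = (1 + 40 * eps) * X - 4 * eps * X) by (field; lra).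
  pose proof (rpow_nonneg X (1/p)). split.
  - destruct (Rle_dec (1 - 40 * eps) 0).
    + pose proof (rpow_nonneg (/ D * Y) (1/p)). nra.
    + eapply Rle_trans; [|apply rpow_mono; [lra|]].
      2: { apply Rmult_le_compat_l with (r := / D) in HL; [|lra]. rewrite E1 in HL.
           assert ((1 - 40 * eps) * X <= (1 - 13 * eps) * X) by nra. eapply Rle_trans; [exact H0|exact HL]. }
      rewrite rpow_mul by lra. apply Rmult_le_compat_r; [lra|]. apply rpow_ge_self; lra.
  - eapply Rle_trans. apply rpow_mono; [lra|].
    { apply Rmult_le_compat_l with (r := / D) in HU; [|lra]. rewrite E2 in HU.
      assert ((1 + 40 * eps) * X - 4 * eps * X <= (1 + 40 * eps) * X) by nra. eapply Rle_trans; [exact HU|exact H0]. }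
    rewrite rpow_mul by lra. apply Rmult_le_compat_r; [lra|]. apply rpow_le_self; lra. Qed.

Lemma fsum_nonneg : forall N f, (forall i, 0 <= f i) -> 0 <= fsum N f.
Proof. intros. rewrite <- (fsum_zero N). apply fsum_le; auto. Qed.

Lemma pnorm1 : forall N y, pnorm N 1 y = fsum N (fun i => Rabs (y i)).
Proof. intros. unfold pnorm. replace (1 / 1) with 1 by field.
  rewrite (fsum_ext _ _ (fun i => Rabs (y i))) by (intros; apply rpow_1, Rabs_pos).
  apply rpow_1, fsum_nonneg. intros; apply Rabs_pos. Qed.

Theorem theorem1 :
  exists C : R, C > 1 /\
  forall (n m d k : nat) (eps : R) (E : nat -> nat -> bool),
    (2 <= n)%nat ->
    (1 <= d)%nat ->
    (d < n)%nat ->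
    0 < eps ->
    / eps < INR n ->
    unbalanced_expander n m d k eps E ->
    (forall (p : R) (x : nat -> R),
        1 <= p -> p <= 1 + 1 / ln (INR n) -> sparse n k x ->
        (1 - C * eps) * pnorm n p x
          <= pnorm m p (fun j => rpow (INR d) (- (1 / p)) * matvec n (adj E) x j)
        /\ pnorm m p (fun j => rpow (INR d) (- (1 / p)) * matvec n (adj E) x j)
          <= (1 + C * eps) * pnorm n p x)
    /\
    (forall x : nat -> R, sparse n k x ->
        (1 - 2 * eps) * pnorm n 1 x <= pnorm m 1 (matvec n (adj E) x) / INR d
        /\ pnorm m 1 (matvec n (adj E) x) / INR d <= pnorm n 1 x).
Proof.
  exists 40. split; [lra|].
  intros n m d k eps E Hn Hd Hdn Heps Hinv [Hreg Hexp].
  assert (HdR : 0 < INR d) by (apply lt_0_INR; lia).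
  split.
  - intros p x Hp1 Hp2 Hsp.
    destruct (support_list n k x Hsp) as [T [HN [Hlt [Hk Hz]]]].
    pose proof (Y_upper n m d k eps E Hn Hd Heps Hreg Hexp x T HN Hlt Hk p Hp1 Hp2) as YU.
    pose proof (Y_lower n m d k eps E Hn Hd Heps Hreg Hexp x T HN Hlt Hk p Hp1 Hp2) as YL.
    assert (PX : pnorm n p x = rpow (lsum (gp x p) T) (1 / p)).
    { unfold pnorm. f_equal. apply fsum_to_lsum; auto.
      intros i Hi Hni. rewrite Hz by auto. rewrite Rabs_R0. apply rpow_0. }
    assert (PY : pnorm m p (fun j => rpow (INR d) (- (1 / p)) * matvec n (adj E) x j)
                 = rpow (/ INR d * Yp m E x T p) (1 / p)).
    { unfold pnorm. f_equal. unfold Yp. rewrite <- fsum_scal. apply fsum_ext. intros j.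
      rewrite (matvec_sr n E x T HN Hlt Hz). rewrite Rabs_mult.
      assert (Hc : 0 < rpow (INR d) (- (1 / p))) by (apply rpow_pos; lra).
      rewrite (Rabs_right (rpow (INR d) (- (1 / p)))) by lra.
      rewrite rpow_mul by (try lra; apply Rabs_pos). f_equal.
      rewrite (rpow_pos_eq (INR d)) by lra. rewrite rpow_pos_eq by (unfold Rpower; apply exp_pos).
      rewrite Rpower_mult. replace (- (1 / p) * p) with (Ropp 1) by (field; lra).
      rewrite Rpower_Ropp, Rpower_1 by lra. reflexivity. }
    rewrite PX, PY.
    apply final_bounds; auto. apply lsum_nonneg; intros; apply rpow_nonneg.
  - intros x Hsp.
    destruct (support_list n k x Hsp) as [T [HN [Hlt [Hk Hz]]]].
    pose proof (part_p1 n m d k eps E Hreg Hexp x T HN Hlt Hk) as [U L].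
    assert (PX : pnorm n 1 x = lsum (g1 x) T).
    { rewrite pnorm1. apply fsum_to_lsum; auto.
      intros i Hi Hni. rewrite Hz by auto. apply Rabs_R0. }
    assert (PY : pnorm m 1 (matvec n (adj E) x) = fsum m (fun j => Rabs (sr E x T j))).
    { rewrite pnorm1. apply fsum_ext. intros j. rewrite (matvec_sr n E x T HN Hlt Hz). reflexivity. }
    rewrite PX, PY.
    assert (0 <= lsum (g1 x) T) by (apply lsum_nonneg; intros; apply Rabs_pos).
    split.
    + apply (Rmult_le_reg_r (INR d)); [lra|].
      replace (fsum m (fun j => Rabs (sr E x T j)) / INR d * INR d) with (fsum m (fun j => Rabs (sr E x T j))) by (field; lra).
      nra.
    + apply (Rmult_le_reg_r (INR d)); [lra|].
      replace (fsum m (fun j => Rabs (sr E x T j)) / INR d * INR d) with (fsum m (fun j => Rabs (sr E x T j))) by (field; lra).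
      nra.
Qed.
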